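(* Let $\mathcal{C}$ be a d-category and let $\omega,\psi$ be paths in $\mathcal{C}$ with $\omega\simeq\psi$. Then the track objects $\widehat\omega$ and $\widehat\psi$ are isomorphic as $\mathcal{C}$-automata.
   Context: A d-category is a small category $\mathcal{C}$ with wide subcategories $\mathcal{C}^+$ (formorphisms) and $\mathcal{C}^-$ (backmorphisms) such that an invertible $\varphi$ is in $\mathcal{C}^+$ iff $\varphi^{-1}\in\mathcal{C}^-$. A linear category is a bipointed d-category isomorphic to a finite (possibly empty) concatenation (gluing $\top$ of one to $\bot$ of the next) of $\mathbf S$ (one formorphism $\bot\to\top$), $\mathbf T$ (one backmorphism $\top\to\bot$), $\mathbf I$ (mutually inverse formorphism $\bot\to\top$ and backmorphism $\top\to\bot$). A path in $\mathcal{C}$ is a d-functor $\omega:\mathcal I\to\mathcal{C}$ from a linear category. Write $\omega\preceq\psi$ if there is a basepoint-preserving d-functor $F$ between their domains with $\psi\circ F=\omega$; $\simeq$ is the equivalence relation generated by $\preceq$. A $\mathcal{C}$-automaton is a presheaf $X:\mathcal{C}^{op}\to\mathbf{Set}$ with sets of start and accept elements; morphisms are presheaf maps preserving them. The track object of $\omega:\mathcal I\to\mathcal{C}$ is the automaton $\widehat\omega=\operatorname{colim}_{i\in\mathcal I}\mathcal{C}(-,\omega(i))$ with single start element the image of $\mathrm{id}_{\omega(\bot)}$ and single accept element the image of $\mathrm{id}_{\omega(\top)}$. *)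

(* Defs.v *)
From mathcomp Require Import all_boot.
From Stdlib Require Import ProofIrrelevance Relation_Operators.

Set Implicit Arguments.
Unset Strict Implicit.
Unset Printing Implicit Defensive.

Record Cat := {
  ob :> Type;
  hom : ob -> ob -> Type;
  idm : forall a, hom a a;
  comp : forall a b c, hom b c -> hom a b -> hom a c;
  comp_id_l : forall a b (f : hom a b), comp (idm b) f = f;
  comp_id_r : forall a b (f : hom a b), comp f (idm a) = f;
  comp_assoc : forall a b c d (f : hom a b) (g : hom b c) (h : hom c d),
      comp h (comp g f) = comp (comp h g) f
}.
Arguments hom {C} a b : rename.
Arguments idm {C} a : rename.
Arguments comp {C a b c} g f : rename.

Record DCat := {
  dcat :> Cat;
  dfwd : forall a b : dcat, hom a b -> Prop;
  dbwd : forall a b : dcat, hom a b -> Prop;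
  dfwd_id : forall a, dfwd (idm a);
  dbwd_id : forall a, dbwd (idm a);
  dfwd_comp : forall a b c (f : hom a b) (g : hom b c),
      dfwd f -> dfwd g -> dfwd (comp g f);
  dbwd_comp : forall a b c (f : hom a b) (g : hom b c),
      dbwd f -> dbwd g -> dbwd (comp g f);
  dinv : forall a b (f : hom a b) (g : hom b a),
      comp g f = idm a -> comp f g = idm b -> (dfwd f <-> dbwd g)
}.
Arguments dfwd {D a b} f : rename.
Arguments dbwd {D a b} f : rename.

Record Functor (C D : Cat) := {
  fobj :> C -> D;
  fmor : forall a b, hom a b -> hom (fobj a) (fobj b);
  fmor_id : forall a, fmor (idm a) = idm (fobj a);
  fmor_comp : forall a b c (f : hom a b) (g : hom b c),
      fmor (comp g f) = comp (fmor g) (fmor f)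
}.
Arguments fmor {C D} F {a b} f : rename.

Record DFunctor (C D : DCat) := {
  dfun :> Functor C D;
  dfun_fwd : forall a b (f : hom a b), dfwd f -> dfwd (fmor dfun f);
  dfun_bwd : forall a b (f : hom a b), dbwd f -> dbwd (fmor dfun f)
}.

(** An isomorphism of d-categories: a d-functor bijective on objects and
    on every hom-set, whose inverse is again a d-functor (i.e. it reflects
    formorphisms and backmorphisms). *)
Definition DIso (C D : DCat) (F : DFunctor C D) : Prop :=
  bijective (fobj F) /\
  (forall a b, bijective (@fmor _ _ F a b)) /\
  (forall a b (f : hom a b), dfwd (fmor F f) -> dfwd f) /\
  (forall a b (f : hom a b), dbwd (fmor F f) -> dbwd f).

(** * The standard linear categories: finite concatenations of S, T, I *)
Inductive letter := LS | LT | LI.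

Definition fwd_ok (l : letter) : bool := if l is LT then false else true.
Definition bwd_ok (l : letter) : bool := if l is LS then false else true.

(** Objects of the concatenation of the word w are 0..size w (the gluing
    points); there is (exactly one) morphism i -> j iff every segment
    between i and j can be traversed in the required direction. *)
Definition lin_hom (w : seq letter) (i j : 'I_(size w).+1) : Prop :=
  forall k : nat,
    ((i <= k < j)%N -> fwd_ok (nth LI w k)) /\
    ((j <= k < i)%N -> bwd_ok (nth LI w k)).

Lemma lin_hom_id w (i : 'I_(size w).+1) : lin_hom i i.
Proof.
move=> k; split=> /andP [H1 H2]; exfalso; move: H1 H2; rewrite leqNgt => /negP; done.
Qed.

Lemma lin_hom_comp w (i j m : 'I_(size w).+1) :
  lin_hom j m -> lin_hom i j -> lin_hom i m.
Proof.
move=> H2 H1 k; split=> /andP [Ha Hb].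
- case: (ltnP k j) => Hkj.
  + by apply: (proj1 (H1 k)); rewrite Ha Hkj.
  + by apply: (proj1 (H2 k)); rewrite Hkj Hb.
- case: (ltnP k j) => Hkj.
  + by apply: (proj2 (H2 k)); rewrite Ha Hkj.
  + by apply: (proj2 (H1 k)); rewrite Hkj Hb.
Qed.

Definition LinCat (w : seq letter) : Cat.
Proof.
refine (@Build_Cat 'I_(size w).+1 (@lin_hom w) (@lin_hom_id w)
          (fun a b c g f => @lin_hom_comp w a b c g f) _ _ _);
  intros; apply: proof_irrelevance.
Defined.

Definition LinDCat (w : seq letter) : DCat.
Proof.
refine (@Build_DCat (LinCat w)
          (fun a b _ => (nat_of_ord a <= nat_of_ord b)%N)
          (fun a b _ => (nat_of_ord b <= nat_of_ord a)%N) _ _ _ _ _).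
- by move=> a /=.
- by move=> a /=.
- by move=> a b c _ _ /= H1 H2; apply: leq_trans H1 H2.
- by move=> a b c _ _ /= H1 H2; apply: leq_trans H2 H1.
- by move=> a b _ _ _ _ /=.
Defined.

Definition lin_bot (w : seq letter) : LinDCat w := @ord0 (size w).
Definition lin_top (w : seq letter) : LinDCat w := @ord_max (size w).

Record Linear := {
  ldcat :> DCat;
  lbot : ldcat;
  ltop : ldcat;
  lin_spec : exists (w : seq letter) (F : DFunctor (LinDCat w) ldcat),
      DIso F /\ F (lin_bot w) = lbot /\ F (lin_top w) = ltop
}.

Record Path (C : DCat) := {
  pdom : Linear;
  pfun : DFunctor pdom C
}.

Definition cast_hom (C : Cat) (a a' b b' : C) (ea : a = a') (eb : b = b')
  (f : hom a b) : hom a' b' :=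
  match ea in _ = x, eb in _ = y return hom x y with
  | erefl, erefl => f
  end.

(** omega <= psi : a basepoint-preserving d-functor F between the domains
    with psi o F = omega (equality of functors, spelled out). *)
Definition path_le (C : DCat) (om ps : Path C) : Prop :=
  exists F : DFunctor (pdom om) (pdom ps),
    F (lbot (pdom om)) = lbot (pdom ps) /\
    F (ltop (pdom om)) = ltop (pdom ps) /\
    exists e : forall i, pfun ps (F i) = pfun om i,
      forall i j (u : hom i j),
        cast_hom (e i) (e j) (fmor (pfun ps) (fmor F u)) = fmor (pfun om) u.

Definition path_equiv (C : DCat) : Path C -> Path C -> Prop :=
  clos_refl_sym_trans (Path C) (@path_le C).

Record Presheaf (C : Cat) := {
  psh :> C -> Type;
  pact : forall a b, hom a b -> psh b -> psh a;
  pact_id : forall a x, pact (idm a) x = x;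
  pact_comp : forall a b c (f : hom a b) (g : hom b c) x,
      pact (comp g f) x = pact f (pact g x)
}.
Arguments pact {C} X {a b} f x : rename.

Record NatTrans (C : Cat) (X Y : Presheaf C) := {
  nt :> forall a, X a -> Y a;
  nt_nat : forall a b (f : hom a b) x, nt (pact X f x) = pact Y f (nt x)
}.

Definition yon (C : Cat) (c : C) : Presheaf C.
Proof.
refine (@Build_Presheaf C (fun a => hom a c) (fun a b f g => comp g f) _ _).
- by move=> a x; apply: comp_id_r.
- by move=> a b d f g x; rewrite comp_assoc.
Defined.

(** a C-automaton: a presheaf with sets of start and accept elements
    (elements of a presheaf X are pairs (a, x) with x in X(a)) *)
Record Automaton (C : Cat) := {
  apsh :> Presheaf C;
  astart : {a : C & apsh a} -> Prop;
  aaccept : {a : C & apsh a} -> Prop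
}.
Arguments astart {C} A p : rename.
Arguments aaccept {C} A p : rename.

Definition aut_mor (C : Cat) (A B : Automaton C) (f : NatTrans A B) : Prop :=
  (forall a x, astart A (existT _ a x) -> astart B (existT _ a (f a x))) /\
  (forall a x, aaccept A (existT _ a x) -> aaccept B (existT _ a (f a x))).

Definition aut_iso (C : Cat) (A B : Automaton C) : Prop :=
  exists (f : NatTrans A B) (g : NatTrans B A),
    aut_mor f /\ aut_mor g /\
    (forall a x, g a (f a x) = x) /\ (forall a y, f a (g a y) = y).

Definition cocone (C : DCat) (om : Path C) (X : Presheaf C)
  (lam : forall i : pdom om, NatTrans (yon (pfun om i)) X) : Prop :=
  forall (i j : pdom om) (u : hom i j) (a : C) (g : hom a (pfun om i)),
    lam j a (comp (fmor (pfun om) u) g) = lam i a g.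

Definition is_colimit (C : DCat) (om : Path C) (X : Presheaf C)
  (lam : forall i : pdom om, NatTrans (yon (pfun om i)) X) : Prop :=
  cocone lam /\
  forall (Z : Presheaf C) (mu : forall i : pdom om, NatTrans (yon (pfun om i)) Z),
    cocone mu ->
    exists h : NatTrans X Z,
      (forall i a g, h a (lam i a g) = mu i a g) /\
      (forall h' : NatTrans X Z, (forall i a g, h' a (lam i a g) = mu i a g) ->
         forall a x, h' a x = h a x).

Definition is_track (C : DCat) (om : Path C) (A : Automaton C) : Prop :=
  exists lam : forall i : pdom om, NatTrans (yon (pfun om i)) A,
    is_colimit lam /\
    (forall p, astart A p <->
       p = existT _ (pfun om (lbot (pdom om)))
                    (lam (lbot (pdom om)) _ (idm (pfun om (lbot (pdom om)))))) /\
    (forall p, aaccept A p <->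
       p = existT _ (pfun om (ltop (pdom om)))
                    (lam (ltop (pdom om)) _ (idm (pfun om (ltop (pdom om)))))).

(* Main.v *)
Require Import Defs.
From mathcomp Require Import all_boot.
From Stdlib Require Import Relation_Operators.
From Stdlib Require Import ProofIrrelevance ClassicalEpsilon Lia.
From mathcomp Require Import zify.
Import Defs.
Set Implicit Arguments.
Unset Strict Implicit.
Unset Printing Implicit Defensive.

Definition lh (w : seq letter) (i j : nat) : Prop := forall k : nat,
    ((i <= k < j)%N -> fwd_ok (nth LI w k)) /\
    ((j <= k < i)%N -> bwd_ok (nth LI w k)).

Lemma lh_lin w (i j : 'I_(size w).+1) : lin_hom i j <-> lh w i j.
Proof. by []. Qed.

Lemma lh_refl w k : lh w k k.
Proof. move=> t; split=> /andP[H1 H2]; exfalso; move: H1 H2; clear; lia. Qed.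

Lemma lh_conv w k a b c : lh w k a -> lh w k b -> a <= c <= b -> lh w k c.
Proof.
move=> Ha Hb /andP[H1 H2] t; split=> /andP[H3 H4].
- apply: (proj1 (Hb t)); apply/andP; split=> //; apply: leq_trans H2; done.
- apply: (proj2 (Ha t)); apply/andP; split=> //; apply: leq_trans H3; done.
Qed.

Lemma lh_sub_fwd w a b k : lh w a b -> a <= k <= b -> lh w k b.
Proof.
move=> Hab /andP[H1 H2] t; split=> /andP[H3 H4].
- apply: (proj1 (Hab t)); apply/andP; split=> //; apply: leq_trans H3; done.
- exfalso; move: H2 H3 H4; clear; lia.
Qed.

Lemma lh_sub_bwd w a b k : lh w b a -> a <= k <= b -> lh w k a.
Proof.
move=> Hab /andP[H1 H2] t; split=> /andP[H3 H4].
- exfalso; move: H1 H3 H4; clear; lia.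
- apply: (proj2 (Hab t)); apply/andP; split=> //; apply: leq_trans H4 _; done.
Qed.

Lemma lh_adj w r : lh w r r.+1 \/ lh w r.+1 r.
Proof.
case E: (nth LI w r) => [||].
- left=> t; split=> /andP[H1 H2].
  + have -> : t = r by move: H1 H2; clear; lia.
    by rewrite E.
  + exfalso; move: H1 H2; clear; lia.
- right=> t; split=> /andP[H1 H2].
  + exfalso; move: H1 H2; clear; lia.
  + have -> : t = r by move: H1 H2; clear; lia.
    by rewrite E.
- left=> t; split=> /andP[H1 H2].
  + have -> : t = r by move: H1 H2; clear; lia.
    by rewrite E.
  + exfalso; move: H1 H2; clear; lia.
Qed.



Lemma mono_nat w n (phi : nat -> nat) :
  (forall r, r < n -> phi r <= phi r.+1 /\ (lh w (phi r) (phi r.+1) \/ lh w (phi r.+1) (phi r))) ->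
  forall p q, p <= q <= n -> phi p <= phi q.
Proof.
move=> Hs p; elim=> [|q IH] /andP[H1 H2].
- by have -> : p = 0 by move: H1; clear; lia.
- case: (leqP p q) => Hpq.
  + apply: leq_trans (IH _) (proj1 (Hs q H2)); apply/andP; split=> //; exact: ltnW.
  + by have -> : p = q.+1 by move: H1 Hpq; clear; lia.
Qed.

Lemma cover_nat w n m (phi : nat -> nat) : phi 0 = 0 -> phi n = m ->
  (forall r, r < n -> phi r <= phi r.+1 /\ (lh w (phi r) (phi r.+1) \/ lh w (phi r.+1) (phi r))) ->
  forall k, k <= m -> exists p, p <= n /\ lh w k (phi p).
Proof.
move=> H0 Hn Hs k Hk.
suff: forall d p, p + d = n -> phi p <= k -> exists q, q <= n /\ lh w k (phi q).
  by move=> /(_ n 0); apply=> //; rewrite H0.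
elim=> [|d IH] p Hpd Hpk.
- rewrite addn0 in Hpd; subst p; exists n; split=> //.
  have -> : phi n = k by move: Hn Hpk Hk; clear; lia.
  exact: lh_refl.
- have Hpn : p < n by move: Hpd; clear; lia.
  case: (leqP (phi p.+1) k) => Hk2.
  + apply: (IH p.+1) => //; move: Hpd; clear; lia.
  + have [Hm [Hl|Hl]] := Hs p Hpn.
    * exists p.+1; split=> //; apply: (lh_sub_fwd Hl); apply/andP; split=> //; exact: ltnW.
    * exists p; split; first exact: ltnW.
      apply: (lh_sub_bwd Hl); apply/andP; split=> //; exact: ltnW.
Qed.

Lemma lin_coord (L : Linear) : exists w (G : DFunctor (LinDCat w) L) (g : L -> 'I_(size w).+1),
 cancel g G /\ cancel G g /\ G (lin_bot w) = lbot L /\ G (lin_top w) = ltop L /\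
 (forall x y : L, inhabited (hom x y) <-> lh w (g x) (g y)) /\
 (forall (x y : L) (f : hom x y), dfwd f <-> g x <= g y) /\
 (forall (x y : L) (f : hom x y), dbwd f <-> g y <= g x) /\
 (forall (x y : L) (f f' : hom x y), f = f').
Proof.
case: (lin_spec L) => w [G [[[g K1 K2] [Hh [Hf Hb]]] [eb et]]].
exists w, G, g; do 4 (split=> //).
split.
  suff H : forall a b, inhabited (hom (G a) (G b)) <-> lh w a b.
    by move=> x y; have := H (g x) (g y); rewrite !K2.
  move=> a b; split.
  - case=> f; case: (Hh a b) => fi _ _; exact: (fi f).
  - move=> H; constructor; exact: (fmor G (H : lin_hom a b)).
split.
  move=> x y; rewrite -[x]K2 -[y]K2 => f; rewrite !K1.
  case: (Hh (g x) (g y)) => fi _ E; rewrite -(E f); split.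
  - move/Hf; done.
  - move=> H; by apply: (dfun_fwd G).
split.
  move=> x y; rewrite -[x]K2 -[y]K2 => f; rewrite !K1.
  case: (Hh (g x) (g y)) => fi _ E; rewrite -(E f); split.
  - move/Hb; done.
  - move=> H; by apply: (dfun_bwd G).
move=> x y; rewrite -[x]K2 -[y]K2 => f f'.
case: (Hh (g x) (g y)) => fi _ E; rewrite -(E f) -(E f').
by rewrite (proof_irrelevance (lin_hom (g x) (g y)) (fi f) (fi f')).
Qed.

Definition conR (I J : Linear) (F : DFunctor I J) (j : J) (a b : I) : Prop :=
  inhabited (hom j (F a)) /\ inhabited (hom j (F b)) /\ inhabited (hom a b).

Lemma core_struct (I J : Linear) (F : DFunctor I J)
  (Fb : F (lbot I) = lbot J) (Ft : F (ltop I) = ltop J) :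
  (forall (x y : J) (f f' : hom x y), f = f') /\
  (forall j : J, exists i : I, inhabited (hom j (F i))) /\
  (forall (j : J) (i i' : I), inhabited (hom j (F i)) -> inhabited (hom j (F i')) ->
     clos_refl_sym_trans I (conR F j) i i').
Proof.
case: (lin_coord I) => v [H [h [hK1 [hK2 [hb [ht [hH [hF [hB _]]]]]]]]].
case: (lin_coord J) => w [G [g [gK1 [gK2 [gb [gt [gH [gF [gB gS]]]]]]]]].
pose phi := fun p : nat => nat_of_ord (g (F (H (@inord (size v) p)))).
have Hs : forall r, r < size v -> phi r <= phi r.+1 /\
    (lh w (phi r) (phi r.+1) \/ lh w (phi r.+1) (phi r)).
  move=> r Hr; have Hr1 : r < (size v).+1 by lia.
  case: (lh_adj v r) => Hl.
  - have [u] : inhabited (hom (H (@inord (size v) r)) (H (@inord (size v) r.+1))).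
      by apply/hH; rewrite !hK2 !inordK.
    have Hu : dfwd u by apply/hF; rewrite !hK2 !inordK.
    have Hfu := dfun_fwd F Hu.
    split; first by move/gF: Hfu.
    left; apply/gH; constructor; exact: (fmor F u).
  - have [u] : inhabited (hom (H (@inord (size v) r.+1)) (H (@inord (size v) r))).
      by apply/hH; rewrite !hK2 !inordK.
    have Hu : dbwd u by apply/hB; rewrite !hK2 !inordK.
    have Hfu := dfun_bwd F Hu.
    split; first by move/gB: Hfu.
    right; apply/gH; constructor; exact: (fmor F u).
have H0 : phi 0 = 0.
  rewrite /phi; have -> : @inord (size v) 0 = lin_bot v by apply: val_inj; rewrite /= inordK.
  by rewrite hb Fb -gb gK2.
have Hn : phi (size v) = size w.
  rewrite /phi; have -> : @inord (size v) (size v) = lin_top v by apply: val_inj; rewrite /= inordK.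
  by rewrite ht Ft -gt gK2.
have Hmono := mono_nat Hs.
split=> //.
split.
  move=> j; have [p [Hp Hl]] := cover_nat H0 Hn Hs (leq_ord (g j)).
  by exists (H (@inord (size v) p)); apply/gH.
move=> j i i'; rewrite -[i]hK1 -[i']hK1.
suff Hc : forall d p, p + d <= size v -> inhabited (hom j (F (H (@inord (size v) p)))) ->
    inhabited (hom j (F (H (@inord (size v) (p + d))))) ->
    clos_refl_sym_trans I (conR F j) (H (@inord (size v) p)) (H (@inord (size v) (p + d))).
  case: (leqP (h i) (h i')) => Hle.
  - move=> S1 S2; have := Hc (h i' - h i) (h i).
    rewrite subnKC // !inord_val; apply=> //; exact: leq_ord.
  - move=> S1 S2; apply: rst_sym; have := Hc (h i - h i') (h i').
    rewrite subnKC; last exact: ltnW.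
    rewrite !inord_val; apply=> //; exact: leq_ord.
elim=> [|d IH] p Hpd S1 S2.
  rewrite addn0; exact: rst_refl.
have Sp1 : inhabited (hom j (F (H (@inord (size v) p.+1)))).
  apply/gH; move/gH: S1 => S1; move/gH: S2 => S2.
  apply: (lh_conv S1 S2); apply/andP; split; apply: Hmono; lia.
apply: (rst_trans _ _ _ (H (@inord (size v) p.+1))); last first.
  by rewrite -addSnnS; apply: IH => //; rewrite addSnnS.
have Hp1 : p < (size v).+1 by lia.
have Hp2 : p.+1 < (size v).+1 by lia.
case: (lh_adj v p) => Hl.
- apply: rst_step; split=> //; split=> //; apply/hH; rewrite !hK2 !inordK //.
- apply: rst_sym; apply: rst_step; split=> //; split=> //; apply/hH; rewrite !hK2 !inordK //.
Qed.

Lemma extend (I J : Linear) (F : DFunctor I J)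
  (Fb : F (lbot I) = lbot J) (Ft : F (ltop I) = ltop J)
  (P : Presheaf J) (x : forall i : I, P (F i))
  (hx : forall (i i' : I) (u : hom i i'), x i = pact P (fmor F u) (x i')) :
  exists y : forall j : J, P j,
    (forall (j j' : J) (u : hom j j'), y j = pact P u (y j')) /\
    (forall i, y (F i) = x i).
Proof.
have [Hsub [Hcov Hcon]] := core_struct Fb Ft.
have Hv : forall (j : J) (i i' : I) (l : hom j (F i)) (l' : hom j (F i')),
    pact P l (x i) = pact P l' (x i').
  move=> j i i' l l'.
  have C := Hcon j i i' (inhabits l) (inhabits l').
  suff H : forall a b, clos_refl_sym_trans I (conR F j) a b ->
     (inhabited (hom j (F a)) <-> inhabited (hom j (F b))) /\
     forall (la : hom j (F a)) (lb : hom j (F b)), pact P la (x a) = pact P lb (x b).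
    exact: (proj2 (H _ _ C)).
  move=> a b; elim=> {a b C}.
  - move=> a b [Sa [Sb [u]]]; split; first by split.
    move=> la lb; rewrite (hx _ _ u) -pact_comp; congr (pact P _ _); exact: Hsub.
  - move=> a; split=> // la lb; congr (pact P _ _); exact: Hsub.
  - move=> a b _ [I1 E1]; split; first by split=> [/I1|/I1].
    move=> la lb; by rewrite (E1 lb la).
  - move=> a b c _ [I1 E1] _ [I2 E2]; split; first by split=> [/I1/I2|/I2/I1].
    move=> la lc; have [lm] : inhabited (hom j (F b)) by apply/I1; constructor.
    by rewrite (E1 la lm) (E2 lm lc).
have ch : forall j : J, {s : {i : I & hom j (F i)} | True}.
  move=> j; apply: constructive_indefinite_description.
  have [i [l]] := Hcov j; by exists (existT _ i l).
exists (fun j => pact P (projT2 (proj1_sig (ch j))) (x (projT1 (proj1_sig (ch j))))).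
split.
- move=> j j' u; rewrite -pact_comp; apply: Hv.
- move=> i; rewrite (Hv _ _ i _ (idm (F i))); exact: pact_id.
Qed.

Lemma uniq_ext (I J : Linear) (F : DFunctor I J)
  (Fb : F (lbot I) = lbot J) (Ft : F (ltop I) = ltop J)
  (P : Presheaf J) (y y' : forall j : J, P j)
  (hy : forall (j j' : J) (u : hom j j'), y j = pact P u (y j'))
  (hy' : forall (j j' : J) (u : hom j j'), y' j = pact P u (y' j'))
  (ag : forall i, y (F i) = y' (F i)) : forall j, y j = y' j.
Proof.
have [_ [Hcov _]] := core_struct Fb Ft.
move=> j; have [i [l]] := Hcov j.
by rewrite (hy _ _ l) (hy' _ _ l) ag.
Qed.

Definition compP (C D : Cat) (Z : Presheaf C) (G : Functor D C) : Presheaf D.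
Proof.
refine (@Build_Presheaf D (fun d => Z (G d)) (fun a b u z => pact Z (fmor G u) z) _ _).
- by move=> a z; rewrite fmor_id pact_id.
- by move=> a b c f g z; rewrite fmor_comp pact_comp.
Defined.

Definition eps (C : Cat) (a b : C) (e : a = b) : hom a b := cast_hom (erefl a) e (idm a).

Lemma eps_K (C : Cat) (a b : C) (e : a = b) : comp (eps (esym e)) (eps e) = idm a.
Proof. by case: b / e; rewrite /eps /= comp_id_l. Qed.

Lemma eps_Kr (C : Cat) (a b : C) (e : a = b) : comp (eps e) (eps (esym e)) = idm b.
Proof. by case: b / e; rewrite /eps /= comp_id_l. Qed.

Lemma cast_nat (C : Cat) (a a' b b' : C) (ea : a = a') (eb : b = b') (f : hom a b) :
  comp (eps eb) f = comp (cast_hom ea eb f) (eps ea).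
Proof. by case: a' / ea; case: b' / eb; rewrite /eps /= comp_id_l comp_id_r. Qed.

Lemma cast_nat' (C : Cat) (a a' b b' : C) (ea : a = a') (eb : b = b') (f : hom a b) :
  comp (eps (esym eb)) (cast_hom ea eb f) = comp f (eps (esym ea)).
Proof. by case: a' / ea; case: b' / eb; rewrite /eps /= comp_id_l comp_id_r. Qed.

Lemma sig_eps (C : Cat) (X : Presheaf C) (c c' : C) (e : c' = c) (N : NatTrans (yon c) X) :
  existT (fun a => X a) c (N c (idm c)) = existT (fun a => X a) c' (N c' (eps e)).
Proof. by destruct e. Qed.

Lemma sig_eps' (C : Cat) (X : Presheaf C) (c c' : C) (e : c' = c) (N : NatTrans (yon c') X) :
  existT (fun a => X a) c' (N c' (idm c')) = existT (fun a => X a) c (N c (eps (esym e))).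
Proof. by destruct e. Qed.

Lemma yoneda (C : Cat) (X : Presheaf C) (c : C) (N : NatTrans (yon c) X) a (g : hom a c) :
  N a g = pact X g (N c (idm c)).
Proof. by rewrite -(nt_nat N) /= comp_id_l. Qed.

Definition mkNT (C : Cat) (X : Presheaf C) (c : C) (z : X c) : NatTrans (yon c) X.
Proof.
refine (@Build_NatTrans C (yon c) X (fun a g => pact X g z) _).
by move=> a b f x /=; rewrite pact_comp.
Defined.

Definition restrNT (C : Cat) (X : Presheaf C) (c c' : C) (k : hom c c') (N : NatTrans (yon c') X) :
  NatTrans (yon c) X.
Proof.
refine (@Build_NatTrans C (yon c) X (fun a g => N a (comp k g)) _).
by move=> a b f x /=; rewrite -(nt_nat N) /= comp_assoc.
Defined.

Definition ntcomp (C : Cat) (X Y Z : Presheaf C) (f : NatTrans X Y) (g : NatTrans Y Z) : NatTrans X Z.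
Proof.
refine (@Build_NatTrans C X Z (fun a x => g a (f a x)) _).
by move=> a b u x; rewrite !nt_nat.
Defined.

Definition ntid (C : Cat) (X : Presheaf C) : NatTrans X X.
Proof. by refine (@Build_NatTrans C X X (fun a x => x) _). Defined.

Lemma cocone_fam (C : DCat) (p : Path C) (X : Presheaf C)
  (lam : forall i : pdom p, NatTrans (yon (pfun p i)) X) : cocone lam ->
  forall (i j : pdom p) (u : hom i j),
    lam i _ (idm _) = pact X (fmor (pfun p) u) (lam j _ (idm _)).
Proof.
move=> H i j u; rewrite -(H i j u) -yoneda; congr (lam j _ _).
by rewrite comp_id_r.
Qed.

Lemma fam_cocone (C : DCat) (p : Path C) (X : Presheaf C) (y : forall j : pdom p, X (pfun p j)) :
  (forall (i j : pdom p) (u : hom i j), y i = pact X (fmor (pfun p) u) (y j)) ->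
  cocone (fun j => @mkNT _ X _ (y j)).
Proof. by move=> H i j u a g /=; rewrite pact_comp -H. Qed.

Lemma track_iso (C : DCat) (p : Path C) (A B : Automaton C) :
  is_track p A -> is_track p B -> aut_iso A B.
Proof.
move=> [la [[ca ua] [sa aa]]] [lb [[cb ub] [sb ab]]].
have [f [Hf _]] := ub _ _ ca.
have [f' [Hf' _]] := ua _ _ ca.
have [g [Hg _]] := ua _ _ cb.
have [g' [Hg' _]] := ub _ _ cb.
have [k [_ Hk]] := ua _ _ ca.
have [k' [_ Hk']] := ub _ _ cb.
clear Hf' Hg'.
have [h1 [Hh1 _]] := ua _ _ cb.
have [h2 [Hh2 _]] := ub _ _ ca.
exists h1, h2.
have gf : forall a x, h2 a (h1 a x) = x.
  move=> a x.
  have E1 := Hk (ntcomp h1 h2) (fun i a g => _) a x.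
  have E2 := Hk (ntid _) (fun i a g => erefl) a x.
  simpl in E1, E2; rewrite E1 //; move=> i0 a0 g0 /=; by rewrite Hh1 Hh2.
have fg : forall a y, h1 a (h2 a y) = y.
  move=> a y.
  have E1 := Hk' (ntcomp h2 h1) (fun i a g => _) a y.
  have E2 := Hk' (ntid _) (fun i a g => erefl) a y.
  simpl in E1, E2; rewrite E1 //; move=> i0 a0 g0 /=; by rewrite Hh2 Hh1.
pose fs := fun (s : {a : C & A a}) => existT (fun a => B a) (projT1 s) (h1 _ (projT2 s)).
pose gs := fun (s : {a : C & B a}) => existT (fun a => A a) (projT1 s) (h2 _ (projT2 s)).
split; [|split; [|split=> //]].
- split=> a x.
  + move/sa=> E; apply/sb; have -> : existT _ a (h1 a x) = fs (existT _ a x) by [].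
    by rewrite E /fs /= Hh1.
  + move/aa=> E; apply/ab; have -> : existT _ a (h1 a x) = fs (existT _ a x) by [].
    by rewrite E /fs /= Hh1.
- split=> a x.
  + move/sb=> E; apply/sa; have -> : existT _ a (h2 a x) = gs (existT _ a x) by [].
    by rewrite E /gs /= Hh2.
  + move/ab=> E; apply/aa; have -> : existT _ a (h2 a x) = gs (existT _ a x) by [].
    by rewrite E /gs /= Hh2.
Qed.

Lemma le_track (C : DCat) (om ps : Path C) (A : Automaton C) :
  path_le om ps -> (is_track om A <-> is_track ps A).
Proof.
move=> [F [Fb [Ft [e heq]]]].
pose ep := fun i => eps (e i).
pose ep' := fun i => eps (esym (e i)).
have N1 : forall i i' (u : hom i i'),
    comp (ep i') (fmor (pfun ps) (fmor F u)) = comp (fmor (pfun om) u) (ep i).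
  by move=> i i' u; rewrite /ep (cast_nat (e i)) heq.
have N2 : forall i i' (u : hom i i'),
    comp (ep' i') (fmor (pfun om) u) = comp (fmor (pfun ps) (fmor F u)) (ep' i).
  by move=> i i' u; rewrite /ep' -(heq _ _ u) cast_nat'.
pose restr := fun (X : Presheaf C) (mu : forall j : pdom ps, NatTrans (yon (pfun ps j)) X)
  (i : pdom om) => restrNT (ep' i) (mu (F i)).
have Hrestr : forall X mu, cocone mu -> cocone (restr X mu).
  move=> X mu Hmu i j u a g /=.
  by rewrite comp_assoc N2 -comp_assoc Hmu.
have Hfam : forall (X : Presheaf C) (lam : forall i : pdom om, NatTrans (yon (pfun om i)) X),
    cocone lam -> forall i i' (u : hom i i'),
    (fun i => lam i _ (ep i)) i =
      pact (compP X (pfun ps)) (fmor F u) ((fun i => lam i _ (ep i)) i').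
  move=> X lam Hl i i' u /=.
  by rewrite -(nt_nat (lam i')) /= N1 Hl.
split.
- move=> [lam [[Hcoc Huniv] [Hst Hacc]]].
  have [y [hy hyF]] := @extend _ _ F Fb Ft (compP A (pfun ps)) (fun i => lam i _ (ep i)) (Hfam A lam Hcoc).
  simpl in hy, hyF.
  exists (fun j => @mkNT _ A _ (y j)); split; [split|split].
  + exact: fam_cocone.
  + move=> Z mu Hmu.
    have [h [Hh Hhu]] := Huniv Z (restr Z mu) (Hrestr Z mu Hmu).
    exists h; split.
    * move=> j a g /=.
      rewrite (nt_nat h) (yoneda (mu j)); congr (pact Z g _).
      apply: (uniq_ext Fb Ft (P := compP Z (pfun ps))
               (y := fun j => h _ (y j)) (y' := fun j => mu j _ (idm _))).
      -- by move=> j1 j2 u /=; rewrite (hy _ _ u) nt_nat.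
      -- exact: cocone_fam.
      -- move=> i /=; rewrite hyF Hh /= eps_K //.
    * move=> h' Hh' a x; apply: Hhu => i a0 g /=.
      have -> : lam i a0 g = pact A (comp (ep' i) g) (y (F i)).
        by rewrite hyF -(nt_nat (lam i)) /= comp_assoc eps_Kr comp_id_l.
      exact: (Hh' (F i) a0 (comp (ep' i) g)).
  + move=> q; rewrite Hst /=.
    have E : forall i, existT (fun a => A a) (pfun om i) (lam i _ (idm _)) =
                       existT (fun a => A a) (pfun ps (F i)) (pact A (idm _) (y (F i))).
      by move=> i; rewrite pact_id hyF (sig_eps (e i)).
    have := E (lbot (pdom om)); rewrite Fb => ->; done.
  + move=> q; rewrite Hacc /=.
    have E : forall i, existT (fun a => A a) (pfun om i) (lam i _ (idm _)) =
                       existT (fun a => A a) (pfun ps (F i)) (pact A (idm _) (y (F i))).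
      by move=> i; rewrite pact_id hyF (sig_eps (e i)).
    have := E (ltop (pdom om)); rewrite Ft => ->; done.
- move=> [lam [[Hcoc Huniv] [Hst Hacc]]].
  exists (restr A lam); split; [split|split].
  + exact: Hrestr.
  + move=> Z mu Hmu.
    have [y [hy hyF]] := @extend _ _ F Fb Ft (compP Z (pfun ps)) (fun i => mu i _ (ep i)) (Hfam Z mu Hmu).
    simpl in hy, hyF.
    have [h [Hh Hhu]] := Huniv Z (fun j => @mkNT _ Z _ (y j)) (fam_cocone hy).
    exists h; split.
    * move=> i a g /=; rewrite Hh /= hyF -(nt_nat (mu i)) /= comp_assoc eps_Kr comp_id_l //.
    * move=> h' Hh' a x; apply: Hhu => j a0 g /=.
      rewrite (yoneda (lam j)) (nt_nat h'); congr (pact Z g _).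
      apply: (uniq_ext Fb Ft (P := compP Z (pfun ps))
               (y := fun j => h' _ (lam j _ (idm _))) (y' := y)).
      -- by move=> j1 j2 u /=; rewrite (cocone_fam Hcoc u) nt_nat.
      -- exact: hy.
      -- move=> i /=; rewrite hyF -(Hh' i) /= eps_K //.
  + move=> q; rewrite Hst /=.
    have E : forall i, existT (fun a => A a) (pfun ps (F i)) (lam (F i) _ (idm _)) =
                       existT (fun a => A a) (pfun om i) (lam (F i) _ (comp (ep' i) (idm _))).
      by move=> i; rewrite comp_id_r (sig_eps' (e i)).
    have E2 : forall i j, F i = j -> existT (fun a => A a) (pfun ps j) (lam j _ (idm _)) =
      existT (fun a => A a) (pfun om i) (lam (F i) _ (comp (ep' i) (idm _))) by move=> i j <-; exact: E.
    by rewrite (E2 _ _ Fb).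
  + move=> q; rewrite Hacc /=.
    have E : forall i, existT (fun a => A a) (pfun ps (F i)) (lam (F i) _ (idm _)) =
                       existT (fun a => A a) (pfun om i) (lam (F i) _ (comp (ep' i) (idm _))).
      by move=> i; rewrite comp_id_r (sig_eps' (e i)).
    have E2 : forall i j, F i = j -> existT (fun a => A a) (pfun ps j) (lam j _ (idm _)) =
      existT (fun a => A a) (pfun om i) (lam (F i) _ (comp (ep' i) (idm _))) by move=> i j <-; exact: E.
    by rewrite (E2 _ _ Ft).
Qed.

Theorem proposition7 (C : DCat) (om ps : Path C) :
  path_equiv om ps ->
  forall (A B : Automaton C), is_track om A -> is_track ps B -> aut_iso A B.
Proof.
move=> Heq A B HA HB.
suff H : forall A, is_track om A <-> is_track ps A.
  by apply: (track_iso (p := ps)) => //; apply/H.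
elim: Heq {A B HA HB}.
- move=> x y Hle A; exact: le_track.
- by move=> x A.
- by move=> x y _ IH A; rewrite IH.
- by move=> x y z _ IH1 _ IH2 A; rewrite IH1 IH2.
Qed.
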